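(* Let $\mathbb A^{\min}:=\bigcup_K\mu_K(K)\subseteq\mathbb A$, the union over all minimal complete valuation fields $K$, with the subspace topology. Write $U_{\mathbb R}:=\bigcup_{\upsilon\in(0,1]}\mu_{\mathbb R_\upsilon}(\mathbb R)$ and, for a prime $q$, $U_q:=\bigcup_{\omega\in(0,\infty)}\mu_{\mathbb Q_q^\omega}(\mathbb Q_q)$. Then: (a) $\mu_{\mathbb Q_0}(\mathbb Q)$ is closed in $\mathbb A^{\min}$. (b) If $K,L$ are distinct minimal fields (from the list $\mathbb Q_0,\mathbb Z(p),\mathbb R_\upsilon,\mathbb Q_p^\omega$), then $\mu_K(K)\cap\mu_L(L)=\emptyset$. (c) The map $(0,1]\times\mathbb R\to U_{\mathbb R}$, $(\upsilon,t)\mapsto\mu_{\mathbb R_\upsilon}(t)$, is a homeomorphism ($\mathbb R$ with the Euclidean topology); $U_{\mathbb R}$ is open in $\mathbb A^{\min}$ and its closure in $\mathbb A^{\min}$ is $U_{\mathbb R}\cup\mu_{\mathbb Q_0}(\mathbb Q)$. (d) For each prime $q$, $U_q$ is open in $\mathbb A^{\min}$ and the map $(0,\infty)\times\mathbb Q_q\to U_q$, $(\omega,s)\mapsto\mu_{\mathbb Q_q^\omega}(s)$, is a homeomorphism ($\mathbb Q_q$ with its $q$-adic topology). (e) For each prime $q$, $\mu_{\mathbb Z(q)}(\mathbb F_q)$ is contained in the closure of $U_q$. (f) $\mu_{\mathbb Q_0}(\mathbb Q)$ is contained in the closure of $\bigcup_{p\text{ prime}}\mu_{\mathbb Q_p^1}(\mathbb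 Q_p)$. (g) The closure of $\bigcup_{p}U_p$ in $\mathbb A^{\min}$ equals $\mu_{\mathbb Q_0}(\mathbb Q)\cup\bigcup_p\mu_{\mathbb Z(p)}(\mathbb F_p)\cup\bigcup_p U_p$. (h) For each prime $q$, $\mu_{\mathbb Q_0}(\mathbb Q)$ is contained in the closure of $U_q$.
   Context: $\mathbb A$ is the set of non-zero multiplicative semi-norms on $\mathbb Z[t]$ with the topology of pointwise convergence. For a complete valuation field $K$ and $s\in K$, $\mu_K(s)\in\mathbb A$ is $p\mapsto|p(s)|_K$. Minimal complete valuation fields (no proper closed subfield): $\mathbb Q_0$ ($\mathbb Q$ with trivial absolute value), $\mathbb Z(p)$ ($\mathbb F_p$ with trivial absolute value), $\mathbb R_\upsilon$ ($\mathbb R$ with $|x|^\upsilon$, $|\cdot|$ Euclidean, $\upsilon\in(0,1]$), $\mathbb Q_p^\omega$ ($\mathbb Q_p$ with $|x|_p^\omega$, $\omega\in(0,\infty)$), $p$ prime; these are pairwise non-isometrically-isomorphic and exhaust all minimal fields up to isometric isomorphism. *)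

(* Defs.v *)
From HB Require Import structures.
From mathcomp Require Import all_boot all_order all_algebra.
From Stdlib Require Import Reals.

Set Implicit Arguments.
Unset Strict Implicit.
Unset Printing Implicit Defensive.

Import GRing.Theory.

Local Open Scope ring_scope.
Definition ev (F : nzRingType) (P : {poly int}) (s : F) : F :=
  (map_poly (fun z : int => z%:~R) P).[s].
(* ring-side helpers used below (R_scope will shadow the %R delimiter) *)
Definition rsub (K : fieldType) (x y : K) : K := x - y.
Definition radd (K : fieldType) (x y : K) : K := x + y.
Definition rmul (K : fieldType) (x y : K) : K := x * y.
Definition rnat (K : fieldType) (n : nat) : K := n%:R.
Definition rfrac (K : fieldType) (a : int) (b : nat) : K := a%:~R / b%:R.
Definition rzero (K : fieldType) : K := 0.
Local Close Scope ring_scope.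

Local Open Scope R_scope.

Definition intR (z : int) : R :=
  match z with Posz n => INR n | Negz n => - INR (S n) end.

Definition evR (P : {poly int}) (t : R) : R :=
  List.fold_right (fun c acc => acc * t + intR c) 0 (polyseq P).

Definition rpow (x a : R) : R :=
  if Req_EM_T x 0 then 0 else Rpower x a.

(** Semi-norms (functions Z[t] -> R); the space A carries the topology of
    pointwise convergence. *)
Definition Sn := {poly int} -> R.

(** Model of Q_p: a field with an absolute value which is non-archimedean,
    restricts to the p-adic absolute value on the integers, is complete, and
    in which Q is dense.  This characterises Q_p up to isometric isomorphism. *)
Definition is_Qp (p : nat) (K : fieldType) (abs : K -> R) : Prop :=
  (forall x : K, 0 <= abs x) /\
  (forall x : K, abs x = 0 <-> x = rzero K) /\
  (forall x y : K, abs (rmul x y) = abs x * abs y) /\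
  (forall x y : K, abs (radd x y) <= Rmax (abs x) (abs y)) /\
  abs (rnat K p) = / INR p /\
  (forall m : nat, ~~ (p %| m)%nat -> abs (rnat K m) = 1) /\
  (forall (x : K) (eps : R), 0 < eps ->
     exists (a : int) (b : nat), (0 < b)%nat /\
       abs (rsub x (rfrac K a b)) < eps) /\
  (forall u : nat -> K,
     (forall eps, 0 < eps -> exists N, forall n m, (N <= n)%coq_nat ->
        (N <= m)%coq_nat -> abs (rsub (u n) (u m)) < eps) ->
     exists l : K, forall eps, 0 < eps -> exists N, forall n, (N <= n)%coq_nat ->
        abs (rsub (u n) l) < eps).

Arguments is_Qp : clear implicits.

Definition mu_Q0 (s : rat) : Sn :=
  fun P => if ev P s == rzero _ then 0 else 1.
Definition mu_Fp (p : nat) (s : 'F_p) : Sn :=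
  fun P => if ev P s == rzero _ then 0 else 1.
Definition mu_R (v t : R) : Sn :=
  fun P => rpow (Rabs (evR P t)) v.
Definition mu_Qp (K : fieldType) (abs : K -> R) (w : R) (s : K) : Sn :=
  fun P => rpow (abs (ev P s)) w.

(** The list of minimal complete valuation fields:
    MQ0 = Q_0, MFp p = Z(p), MR v = R_v, MQp p w = Q_p^w. *)
Inductive MinField : Type :=
| MQ0 : MinField
| MFp : nat -> MinField
| MR : R -> MinField
| MQp : nat -> R -> MinField.

Definition valid (F : MinField) : Prop :=
  match F with
  | MQ0 => True
  | MFp p => prime p
  | MR v => 0 < v <= 1
  | MQp p w => prime p /\ 0 < w
  end.

Definition img (Qp : nat -> fieldType) (absp : forall p, Qp p -> R)
  (F : MinField) : Sn -> Prop :=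
  match F with
  | MQ0 => fun f => exists s : rat, f = mu_Q0 s
  | MFp p => fun f => exists s : 'F_p, f = @mu_Fp p s
  | MR v => fun f => exists t : R, f = mu_R v t
  | MQp p w => fun f => exists s : Qp p, f = mu_Qp (absp p) w s
  end.

Arguments img : clear implicits.

Definition Amin Qp absp (f : Sn) : Prop :=
  exists F, valid F /\ img Qp absp F f.

Arguments Amin : clear implicits.

Definition U_R (f : Sn) : Prop :=
  exists v t, 0 < v <= 1 /\ f = mu_R v t.

Definition U_q (Qp : nat -> fieldType) (absp : forall p, Qp p -> R) (q : nat) (f : Sn) : Prop :=
  exists w (s : Qp q), 0 < w /\ f = mu_Qp (absp q) w s.

Arguments U_q : clear implicits.

Definition nbhd (f0 : Sn) (Ps : list {poly int}) (eps : R) (g : Sn) : Prop :=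
  forall P, List.In P Ps -> Rabs (g P - f0 P) < eps.

Definition closure_in (X S : Sn -> Prop) (f : Sn) : Prop :=
  X f /\ forall Ps eps, 0 < eps -> exists g, S g /\ nbhd f Ps eps g.

Definition open_in (X S : Sn -> Prop) : Prop :=
  (forall f, S f -> X f) /\
  forall f, S f -> exists Ps eps, 0 < eps /\
    forall g, X g -> nbhd f Ps eps g -> S g.

Definition closed_in (X S : Sn -> Prop) : Prop :=
  (forall f, S f -> X f) /\ forall f, closure_in X S f -> S f.

Definition homeo_onto {A : Type} (D : A -> Prop) (d : A -> A -> R)
  (h : A -> Sn) (U : Sn -> Prop) : Prop :=
  (forall a, D a -> U (h a)) /\
  (forall f, U f -> exists a, D a /\ f = h a) /\
  (forall a b, D a -> D b -> h a = h b -> a = b) /\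
  (forall a, D a -> forall Ps eps, 0 < eps -> exists del, 0 < del /\
     forall b, D b -> d a b < del -> nbhd (h a) Ps eps (h b)) /\
  (forall a, D a -> forall eps, 0 < eps -> exists Ps del, 0 < del /\
     forall b, D b -> nbhd (h a) Ps del (h b) -> d a b < eps).

Definition dRR (a b : R * R) : R :=
  Rmax (Rabs (fst a - fst b)) (Rabs (snd a - snd b)).
Definition dRK (K : fieldType) (abs : K -> R) (a b : R * K) : R :=
  Rmax (Rabs (fst a - fst b)) (abs (rsub (snd a) (snd b))).

(* Main.v *)
Require Import Defs.
From HB Require Import structures.
From mathcomp Require Import all_boot all_order all_algebra.
From Stdlib Require Import Reals Lra Lia Psatz List.
From mathcomp Require Import Rstruct.
Local Open Scope R_scope.

Lemma rpow_0 a : rpow 0 a = 0.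
Proof. rewrite /rpow; case: (Req_dec_T 0 0) => E /=; [reflexivity| congruence]. Qed.

Lemma rpow_nz x a : x <> 0 -> rpow x a = exp (a * ln x).
Proof. intros H; rewrite /rpow; case: (Req_dec_T x 0) => E /=; [congruence| reflexivity]. Qed.

Lemma rpow_ge0 x a : 0 <= rpow x a.
Proof. rewrite /rpow; case: (Req_dec_T x 0) => E /=; [apply Rle_refl|]. unfold Rpower. left; apply exp_pos. Qed.

Lemma rpow_gt0 x a : x <> 0 -> 0 < rpow x a.
Proof. intros H; rewrite rpow_nz; auto; apply exp_pos. Qed.

Lemma rpow_1 a : rpow 1 a = 1.
Proof. rewrite rpow_nz; [|lra]. rewrite ln_1 Rmult_0_r exp_0; reflexivity. Qed.

Lemma rpow_inv x a : 0 <= x -> a <> 0 -> rpow (rpow x a) (/ a) = x.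
Proof.
intros Hx Ha. destruct (Req_EM_T x 0) as [->|Hn].
- rewrite !rpow_0; reflexivity.
- rewrite (rpow_nz x a Hn). rewrite rpow_nz; [|apply Rgt_not_eq, exp_pos].
  rewrite ln_exp. replace (/ a * (a * ln x)) with (ln x) by (field; auto).
  apply exp_ln; lra.
Qed.

Lemma rpow_lt1 x a : 0 < x < 1 -> 0 < a -> rpow x a < 1.
Proof. intros Hx Ha. rewrite rpow_nz; [|lra]. rewrite -exp_0. apply exp_increasing.
 assert (ln x < 0) by (rewrite -ln_1; apply ln_increasing; lra). nra. Qed.

Lemma rpow_gt1 x a : 1 < x -> 0 < a -> 1 < rpow x a.
Proof. intros Hx Ha. rewrite rpow_nz; [|lra]. rewrite -exp_0. apply exp_increasing.
 assert (0 < ln x) by (rewrite -ln_1; apply ln_increasing; lra). nra. Qed.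

Lemma rpow_ln x a : 0 < x -> ln (rpow x a) = a * ln x.
Proof. intros Hx. rewrite rpow_nz; [|lra]. apply ln_exp. Qed.

Lemma rpow_inj_exp x a b : 0 < x -> x <> 1 -> rpow x a = rpow x b -> a = b.
Proof. intros Hx H1 H. assert (ln (rpow x a) = ln (rpow x b)) by (rewrite H; auto).
 rewrite !rpow_ln in H0; auto. assert (ln x <> 0).
 { intro E. apply H1. rewrite -(exp_ln x Hx) E exp_0. auto. }
 apply Rmult_eq_reg_r with (ln x); auto. Qed.

Lemma cont_eps f x : continuity_pt f x -> forall eps, 0 < eps ->
  exists del, 0 < del /\ forall y, Rabs (y - x) < del -> Rabs (f y - f x) < eps.
Proof.
intros Hc eps He. destruct (Hc eps He) as [del [Hd H]]. exists del; split; auto.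
intros y Hy. destruct (Req_EM_T y x) as [->|Hn].
- rewrite Rminus_diag Rabs_R0; auto.
- apply (H y). split. { split; [constructor| intro E; apply Hn; symmetry; exact E]. } exact Hy.
Qed.

Lemma ln_cont_eps x : 0 < x -> forall eps, 0 < eps ->
  exists del, 0 < del /\ forall y, Rabs (y - x) < del -> 0 < y /\ Rabs (ln y - ln x) < eps.
Proof.
intros Hx eps He.
assert (Hc : continuity_pt ln x).
{ apply derivable_continuous_pt. exists (/ x). apply derivable_pt_lim_ln; auto. }
destruct (cont_eps _ _ Hc eps He) as [d [Hd H]].
exists (Rmin d (x/2)); split. { apply Rmin_pos; lra. }
intros y Hy. assert (Rabs (y - x) < d) by (eapply Rlt_le_trans; [exact Hy| apply Rmin_l]).
assert (Rabs (y - x) < x/2) by (eapply Rlt_le_trans; [exact Hy| apply Rmin_r]).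
split; auto. apply Rabs_def2 in H1. lra.
Qed.

Lemma exp_cont_eps x eps : 0 < eps ->
  exists del, 0 < del /\ forall y, Rabs (y - x) < del -> Rabs (exp y - exp x) < eps.
Proof. intros He. apply cont_eps; auto. apply derivable_continuous_pt. exists (exp x).
 apply derivable_pt_lim_exp. Qed.

Lemma Rabs_lt_both a b : Rabs a < b <-> - b < a < b.
Proof. split; [intro H; apply Rabs_def2 in H; lra| intros; apply Rabs_def1; lra]. Qed.

Lemma rpow_cont x a : 0 <= x -> 0 < a -> forall eps, 0 < eps ->
  exists del, 0 < del /\ forall x' a', 0 <= x' -> Rabs (x' - x) < del ->
    Rabs (a' - a) < del -> Rabs (rpow x' a' - rpow x a) < eps.
Proof.
intros Hx Ha eps He. destruct Hx as [Hx|Hx].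
- destruct (exp_cont_eps (a * ln x) eps He) as [d2 [Hd2 H2]].
  set (eta := Rmin 1 (d2 / (2 * (a + 1)))).
  assert (Heta : 0 < eta). { apply Rmin_pos; [lra|]. apply Rdiv_lt_0_compat; lra. }
  destruct (ln_cont_eps x Hx eta Heta) as [d1 [Hd1 H1]].
  set (L := Rabs (ln x)).
  assert (HL : 0 <= L) by apply Rabs_pos.
  exists (Rmin d1 (d2 / (2 * (L + 1)))). split.
  { apply Rmin_pos; auto. apply Rdiv_lt_0_compat; lra. }
  intros x' a' Hx' Hxx Haa.
  assert (Hxx1 : Rabs (x' - x) < d1) by (eapply Rlt_le_trans; [exact Hxx| apply Rmin_l]).
  assert (Haa1 : Rabs (a' - a) < d2 / (2 * (L + 1))) by (eapply Rlt_le_trans; [exact Haa| apply Rmin_r]).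
  destruct (H1 x' Hxx1) as [Hx'p Hln].
  rewrite (rpow_nz x' a') ?(rpow_nz x a); try lra.
  apply H2.
  assert (E : a' * ln x' - a * ln x = (a' - a) * ln x' + a * (ln x' - ln x)) by ring.
  rewrite E.
  assert (Hlnx' : Rabs (ln x') <= L + 1).
  { unfold L. replace (ln x') with ((ln x' - ln x) + ln x) by ring.
    eapply Rle_trans; [apply Rabs_triang|].
    assert (eta <= 1) by apply Rmin_l. lra. }
  assert (Heta2 : eta <= d2 / (2 * (a + 1))) by apply Rmin_r.
  eapply Rle_lt_trans; [apply Rabs_triang|]. rewrite !Rabs_mult.
  rewrite (Rabs_pos_eq a); [|lra].
  assert (T1 : Rabs (a' - a) * Rabs (ln x') <= d2 / (2 * (L + 1)) * (L + 1)).
  { apply Rmult_le_compat; try apply Rabs_pos; lra. }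
  assert (T2 : a * Rabs (ln x' - ln x) <= a * (d2 / (2 * (a + 1)))).
  { apply Rmult_le_compat_l; lra. }
  assert (E1 : d2 / (2 * (L + 1)) * (L + 1) = d2 / 2) by (field; lra).
  assert (E2 : a * (d2 / (2 * (a + 1))) < d2 / 2).
  { replace (a * (d2 / (2 * (a + 1)))) with ((d2/2) * (a / (a + 1))) by (field; lra).
    assert (a / (a + 1) < 1). { apply (Rmult_lt_reg_r (a + 1)); [lra|].
      replace (a / (a + 1) * (a + 1)) with a by (field; lra). lra. }
    nra. }
  lra.
- subst x. rewrite rpow_0.
  set (d3 := exp (2 * ln eps / a)).
  assert (Hd3 : 0 < d3) by apply exp_pos.
  exists (Rmin (a/2) (Rmin 1 d3)). split.
  { apply Rmin_pos; [lra|]. apply Rmin_pos; lra. }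
  intros x' a' Hx' Hxx Haa.
  rewrite Rminus_0_r in Hxx. rewrite Rabs_pos_eq in Hxx; auto.
  assert (Ha' : a/2 < a'). { assert (Rabs (a' - a) < a/2) by (eapply Rlt_le_trans; [exact Haa| apply Rmin_l]).
    apply Rabs_def2 in H. lra. }
  assert (Hx1 : x' < 1) by (eapply Rlt_le_trans; [exact Hxx| eapply Rle_trans; [apply Rmin_r| apply Rmin_l]]).
  assert (Hx3 : x' < d3) by (eapply Rlt_le_trans; [exact Hxx| eapply Rle_trans; [apply Rmin_r| apply Rmin_r]]).
  rewrite Rminus_0_r. destruct (Req_EM_T x' 0) as [->|Hn].
  { rewrite rpow_0 Rabs_R0; auto. }
  rewrite Rabs_pos_eq; [|apply rpow_ge0]. rewrite rpow_nz; auto.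
  assert (Hxp : 0 < x') by lra.
  assert (Hl1 : ln x' < 0) by (rewrite -ln_1; apply ln_increasing; lra).
  assert (Hl3 : ln x' < 2 * ln eps / a).
  { unfold d3 in Hx3. rewrite -(ln_exp (2 * ln eps / a)). apply ln_increasing; auto. }
  rewrite -(exp_ln eps He). apply exp_increasing.
  assert (a' * ln x' <= a / 2 * ln x') by nra.
  assert (a / 2 * ln x' < a / 2 * (2 * ln eps / a)) by (apply Rmult_lt_compat_l; lra).
  replace (a / 2 * (2 * ln eps / a)) with (ln eps) in H0 by (field; lra).
  lra.
Qed.

Lemma rpow_to1 x : 0 < x -> forall eps, 0 < eps ->
  exists d, 0 < d /\ forall a, 0 < a < d -> Rabs (rpow x a - 1) < eps.
Proof.
intros Hx eps He. destruct (exp_cont_eps 0 eps He) as [d [Hd H]].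
exists (d / (Rabs (ln x) + 1)). split. { apply Rdiv_lt_0_compat; auto. pose proof (Rabs_pos (ln x)); lra. }
intros a Ha. rewrite rpow_nz; [|lra]. rewrite -exp_0. apply H.
rewrite Rminus_0_r Rabs_mult Rabs_pos_eq; [|lra].
assert (a * (Rabs (ln x) + 1) < d).
{ destruct Ha as [Ha1 Ha2]. apply (Rmult_lt_compat_r (Rabs (ln x) + 1)) in Ha2;
  [|pose proof (Rabs_pos (ln x)); lra].
  replace (d / (Rabs (ln x) + 1) * (Rabs (ln x) + 1)) with d in Ha2 by (field; pose proof (Rabs_pos (ln x)); lra).
  exact Ha2. }
pose proof (Rabs_pos (ln x)). nra.
Qed.

Lemma rpow_to0 x : 0 <= x < 1 -> forall eps, 0 < eps ->
  exists A, 0 < A /\ forall a, A < a -> rpow x a < eps.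
Proof.
intros Hx eps He. destruct (Req_EM_T x 0) as [->|Hn].
{ exists 1. split; [lra|]. intros a _. rewrite rpow_0; auto. }
assert (Hl : ln x < 0) by (rewrite -ln_1; apply ln_increasing; lra).
exists (Rabs (ln eps / ln x) + 1). split. { pose proof (Rabs_pos (ln eps / ln x)); lra. }
intros a Ha. rewrite rpow_nz; auto. rewrite -(exp_ln eps He). apply exp_increasing.
assert (ln eps / ln x < a) by (pose proof (Rle_abs (ln eps / ln x)); lra).
apply (Rmult_lt_compat_r (- ln x)) in H; [|lra].
replace (ln eps / ln x * - ln x) with (- ln eps) in H by (field; lra). lra.
Qed.

Lemma list_min {T : Type} (Ps : list T) (Q : T -> R -> Prop) :
  (forall P d d', Q P d -> 0 < d' <= d -> Q P d') ->
  (forall P, In P Ps -> exists d, 0 < d /\ Q P d) ->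
  exists d, 0 < d /\ forall P, In P Ps -> Q P d.
Proof.
intros Hm. induction Ps as [|P0 Ps IH]; intros H.
- exists 1. split; [lra| intros P []].
- destruct (H P0 (in_eq _ _)) as [d0 [Hd0 HQ0]].
  destruct IH as [d1 [Hd1 HQ1]]. { intros P HP; apply H; right; auto. }
  exists (Rmin d0 d1). split. { apply Rmin_pos; auto. }
  intros P [<-|HP].
  + apply (Hm _ d0); auto. split; [apply Rmin_pos; auto| apply Rmin_l].
  + apply (Hm _ d1); auto. split; [apply Rmin_pos; auto| apply Rmin_r].
Qed.

Lemma list_max {T : Type} (Ps : list T) (Q : T -> R -> Prop) :
  (forall P A A', Q P A -> A <= A' -> Q P A') ->
  (forall P, In P Ps -> exists A, Q P A) ->
  exists A, forall P, In P Ps -> Q P A.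
Proof.
intros Hm. induction Ps as [|P0 Ps IH]; intros H.
- exists 0. intros P [].
- destruct (H P0 (in_eq _ _)) as [d0 HQ0].
  destruct IH as [d1 HQ1]. { intros P HP; apply H; right; auto. }
  exists (Rmax d0 d1).
  intros P [<-|HP].
  + apply (Hm _ d0); auto. apply Rmax_l.
  + apply (Hm _ d1); auto. apply Rmax_r.
Qed.

Lemma clos_ge X S f P c : closure_in X S f -> (forall g, S g -> c <= g P) -> c <= f P.
Proof.
intros [_ H] Hg. destruct (Rle_lt_dec c (f P)) as [h|h]; auto.
destruct (H (P :: nil) (c - f P)) as [g [Sg Hn]]; [lra|].
specialize (Hn P (in_eq _ _)). specialize (Hg g Sg).
apply Rabs_def2 in Hn. lra.
Qed.

Lemma clos_le X S f P c : closure_in X S f -> (forall g, S g -> g P <= c) -> f P <= c.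
Proof.
intros [_ H] Hg. destruct (Rle_lt_dec (f P) c) as [h|h]; auto.
destruct (H (P :: nil) (f P - c)) as [g [Sg Hn]]; [lra|].
specialize (Hn P (in_eq _ _)). specialize (Hg g Sg).
apply Rabs_def2 in Hn. lra.
Qed.

Lemma clos_mono X (S T : Sn -> Prop) f : (forall g, S g -> T g) ->
  closure_in X S f -> closure_in X T f.
Proof.
intros HST [HX H]. split; auto. intros Ps eps He. destruct (H Ps eps He) as [g [Sg Hg]].
exists g; split; auto.
Qed.

Lemma clos_self X (S : Sn -> Prop) f : X f -> S f -> closure_in X S f.
Proof.
intros HX HS. split; auto. intros Ps eps He. exists f. split; auto.
intros P _. rewrite Rminus_diag Rabs_R0. auto.
Qed.

Delimit Scope ring_scope with ring.
Set Implicit Arguments.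
Import GRing.Theory.

Definition AV (K : fieldType) (abs : K -> R) : Prop :=
  (forall x, 0 <= abs x) /\ (forall x, abs x = 0 <-> x = 0%ring) /\
  (forall x y, abs (x * y)%ring = abs x * abs y) /\
  (forall x y, abs (x + y)%ring <= abs x + abs y).

Lemma AV_Qp p K abs : is_Qp p K abs -> AV K abs.
Proof.
intros [H0 [H1 [H2 [H3 _]]]]. split; [|split; [|split]]; auto.
intros x y. eapply Rle_trans; [apply (H3 x y)|].
pose proof (H0 x); pose proof (H0 y). unfold Rmax; destruct (Rle_dec _ _); lra.
Qed.

Section AbsV.
Variables (K : fieldType) (abs : K -> R) (HA : AV K abs).

Lemma abs_ge0 x : 0 <= abs x. Proof. apply HA. Qed.
Lemma abs_eq0 x : abs x = 0 <-> x = 0%ring. Proof. apply HA. Qed.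
Lemma absM x y : abs (x * y)%ring = abs x * abs y. Proof. apply HA. Qed.
Lemma absD x y : abs (x + y)%ring <= abs x + abs y. Proof. apply HA. Qed.
Lemma abs0 : abs 0%ring = 0. Proof. apply abs_eq0; reflexivity. Qed.

Lemma abs1 : abs 1%ring = 1.
Proof.
pose proof (absM 1 1) as H. rewrite mulr1 in H.
assert (abs 1%ring <> 0) by (intro E; apply abs_eq0 in E; move: (@oner_neq0 K); rewrite E eqxx; discriminate).
apply (Rmult_eq_reg_l (abs 1%ring)); auto. lra.
Qed.

Lemma absN x : abs (- x)%ring = abs x.
Proof.
assert (Hm : abs (-1)%ring = 1).
{ pose proof (absM (-1) (-1)) as H. rewrite mulrNN mulr1 abs1 in H.
  pose proof (abs_ge0 (-1)%ring). nra. }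
rewrite -mulN1r absM Hm. ring.
Qed.

Lemma absB_sym x y : abs (x - y)%ring = abs (y - x)%ring.
Proof. rewrite -absN opprB. reflexivity. Qed.

Lemma abs_diff x y : Rabs (abs x - abs y) <= abs (x - y)%ring.
Proof.
apply Rabs_le. split.
- pose proof (absD (y - x) x) as Hd. rewrite subrK absB_sym in Hd.
  set u := abs (x - y)%ring in Hd *. clearbody u. lra.
- pose proof (absD (x - y) y) as Hd. rewrite subrK in Hd.
  set u := abs (x - y)%ring in Hd *. clearbody u. lra.
Qed.

Lemma abs_neq0 x : x <> 0%ring -> 0 < abs x.
Proof. intros H. destruct (abs_ge0 x) as [h|h]; auto. symmetry in h. apply abs_eq0 in h. contradiction. Qed.

Lemma abs_div x y : y <> 0%ring -> abs (x / y)%ring = abs x / abs y.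
Proof.
intros Hy. pose proof (abs_neq0 Hy).
apply (Rmult_eq_reg_r (abs y)); [| lra]. rewrite -absM divfK; [|apply/eqP; auto]. field; lra.
Qed.

Lemma poly_cont (p : {poly K}) s eps : 0 < eps ->
  exists del, 0 < del /\ forall x, abs (x - s)%ring < del -> abs (p.[x] - p.[s])%ring < eps.
Proof.
revert eps. elim/poly_ind: p.
- intros eps He. exists 1. split; [lra|]. intros x _. rewrite !horner0 subrr abs0. auto.
- intros q c IH eps He.
  set (B := abs q.[s]%ring). set (S := abs s).
  assert (HB : 0 <= B) by apply abs_ge0. assert (HS : 0 <= S) by apply abs_ge0.
  destruct (IH (eps / (2 * (S + 1)))) as [d1 [Hd1 H1]].
  { apply Rdiv_lt_0_compat; lra. }
  exists (Rmin 1 (Rmin d1 (eps / (2 * (B + 1))))). split.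
  { apply Rmin_pos; [lra|]. apply Rmin_pos; auto. apply Rdiv_lt_0_compat; lra. }
  intros x Hx.
  assert (Hx1 : abs (x - s)%ring < 1) by (eapply Rlt_le_trans; [exact Hx| apply Rmin_l]).
  assert (Hx2 : abs (x - s)%ring < d1) by (eapply Rlt_le_trans; [exact Hx| eapply Rle_trans; [apply Rmin_r| apply Rmin_l]]).
  assert (Hx3 : abs (x - s)%ring < eps / (2 * (B + 1))) by (eapply Rlt_le_trans; [exact Hx| eapply Rle_trans; [apply Rmin_r| apply Rmin_r]]).
  rewrite !hornerMXaddC.
  have -> : ((q.[x] * x + c) - (q.[s] * s + c) = (q.[x] - q.[s]) * x + q.[s] * (x - s))%ring
    by rewrite mulrBl mulrBr addrA subrK opprD addrACA subrr addr0.
  eapply Rle_lt_trans; [apply absD|]. rewrite !absM.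
  assert (Hax : abs x <= S + 1).
  { have E : x = ((x - s) + s)%ring by rewrite subrK. rewrite E. eapply Rle_trans; [apply absD|]. unfold S. lra. }
  specialize (H1 x Hx2).
  pose proof (abs_ge0 (q.[x] - q.[s])%ring) as Hp1. pose proof (abs_ge0 x) as Hp2. pose proof (abs_ge0 (x - s)%ring) as Hp3.
  assert (T1 : abs (q.[x] - q.[s])%ring * abs x <= eps / (2 * (S + 1)) * (S + 1)).
  { apply Rmult_le_compat; lra. }
  assert (T2 : B * abs (x - s)%ring < eps / 2).
  { apply (Rle_lt_trans _ ((B + 1) * abs (x - s)%ring)). { apply Rmult_le_compat_r; lra. }
    apply (Rlt_le_trans _ ((B + 1) * (eps / (2 * (B + 1))))). { apply Rmult_lt_compat_l; lra. }
    right; field; lra. }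
  replace (eps / (2 * (S + 1)) * (S + 1)) with (eps / 2) in T1 by (field; lra).
  unfold B in T2.
  set a4 := abs q.[s]%ring in T2 *. set a1 := abs (q.[x] - q.[s])%ring in T1 *. set a2 := abs x in T1 *.
  set a3 := abs (x - s)%ring in T2 *. clearbody a1 a2 a3 a4. lra.
Qed.

Lemma abs_cont (p : {poly K}) s eps : 0 < eps ->
  exists del, 0 < del /\ forall x, abs (x - s)%ring < del -> Rabs (abs p.[x] - abs p.[s]) < eps.
Proof.
intros He. destruct (poly_cont p s He) as [d [Hd H]]. exists d; split; auto.
intros x Hx. eapply Rle_lt_trans; [apply abs_diff| auto].
Qed.

End AbsV.

Section EvAlg.
Local Open Scope ring_scope.

Lemma evE (F : nzRingType) P (s : F) : ev P s = (map_poly ( *~%R (1 : F)) P).[s].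
Proof. by []. Qed.

Lemma ev_const (F : nzRingType) (c : int) (s : F) : ev c%:P s = c%:~R.
Proof. by rewrite /ev map_polyC hornerC. Qed.

Lemma ev_intr (F : comNzRingType) (P : {poly int}) (z : int) : ev P (z%:~R : F) = (P.[z])%:~R.
Proof. by rewrite /ev horner_map. Qed.

Lemma ev_lin (F : comNzRingType) (a b : int) (x : F) :
  ev (b%:P * 'X - a%:P) x = b%:~R * x - a%:~R.
Proof. by rewrite evE rmorphB rmorphM /= !map_polyC map_polyX !hornerE. Qed.

Lemma ev_X (F : comNzRingType) (x : F) : ev 'X x = x.
Proof. by rewrite /ev map_polyX hornerX. Qed.

Lemma ev_Xsub1 (F : comNzRingType) (x : F) : ev ('X - 1) x = x - 1.
Proof. by rewrite evE rmorphB /= map_polyX rmorph1 !hornerE. Qed.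

Definition hom (P : {poly int}) (a d : int) : int :=
  \sum_(i < size P) P`_i * a ^+ i * d ^+ (size P - i).

Lemma ev_hom (F : fieldType) (P : {poly int}) (a d : int) :
  (d%:~R : F) != 0 -> (d%:~R : F) ^+ size P * ev P (a%:~R / d%:~R) = (hom P a d)%:~R.
Proof.
move=> Hd. rewrite evE (@horner_coef_wide _ (size P)); last exact: size_poly.
rewrite mulr_sumr /hom rmorph_sum /=. apply: eq_bigr => i _.
rewrite coef_map /= !rmorphM !rmorphXn /=.
have Hi : leq i (size P) by apply: ltnW.
rewrite -{1}(subnK Hi) exprD -mulrA (mulrCA (d%:~R ^+ i)) -exprMn.
have -> : (d%:~R * (a%:~R / d%:~R) = (a%:~R : F)) by rewrite mulrC divfK.
by rewrite mulrC.
Qed.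

End EvAlg.

Section Qp.
Variables (p : nat) (K : fieldType) (abs : K -> R) (H : is_Qp p K abs) (Hp : prime p).

Lemma HA : AV K abs. Proof. exact: AV_Qp H. Qed.

Lemma ultra x y : abs (x + y)%ring <= Rmax (abs x) (abs y).
Proof. destruct H as [_ [_ [_ [H3 _]]]]. apply H3. Qed.

Lemma abs_p : abs (p%:R)%ring = / INR p.
Proof. destruct H as [_ [_ [_ [_ [H4 _]]]]]. apply H4. Qed.

Lemma abs_cop m : ~~ (p %| m)%nat -> abs (m%:R)%ring = 1.
Proof. destruct H as [_ [_ [_ [_ [_ [H5 _]]]]]]. apply H5. Qed.

Lemma INR_p_gt1 : 1 < INR p.
Proof. apply lt_1_INR. apply/ltP. exact: prime_gt1. Qed.

Lemma abs_nat_le1 n : abs (n%:R)%ring <= 1.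
Proof.
elim: n => [|n IH]. { rewrite (abs0 HA). lra. }
rewrite -addn1 natrD. eapply Rle_trans; [apply ultra|].
rewrite (abs1 HA). unfold Rmax; destruct (Rle_dec _ _); lra.
Qed.

Lemma abs_expr x n : abs (x ^+ n)%ring = (abs x) ^ n.
Proof.
elim: n => [|n IH]. { by rewrite expr0 (abs1 HA). }
by rewrite exprS (absM HA) IH.
Qed.

Lemma abs_nat_pos n : (0 < n)%nat -> 0 < abs (n%:R)%ring.
Proof.
move=> Hn. case: (pfactor_coprime Hp Hn) => m Hc ->.
rewrite natrM (absM HA) natrX abs_expr abs_p abs_cop; last by rewrite -prime_coprime.
apply Rmult_lt_0_compat; [lra|]. apply pow_lt. apply Rinv_0_lt_compat. pose proof INR_p_gt1; lra.
Qed.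

Lemma abs_intr z : abs (z%:~R)%ring = abs ((absz z)%:R)%ring.
Proof. case: z => n //=. rewrite NegzE mulrNz (absN HA). by []. Qed.

Lemma charK z : (z%:~R : K)%ring = 0%ring -> z = 0%ring.
Proof.
move=> E. have : abs (z%:~R)%ring = 0 by rewrite E (abs0 HA).
rewrite abs_intr. case: (posnP (absz z)) => [Hz|Hz].
- move=> _. by apply/eqP; rewrite -absz_eq0 Hz.
- move=> E2. pose proof (abs_nat_pos _ Hz). lra.
Qed.

Lemma abs_int_le1 z : abs (z%:~R)%ring <= 1.
Proof. rewrite abs_intr. apply abs_nat_le1. Qed.

Lemma abs_int_dvd z : (p %| absz z)%nat -> abs (z%:~R)%ring <= / INR p.
Proof.
rewrite abs_intr. case/dvdnP => m ->. rewrite natrM (absM HA) abs_p.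
pose proof (abs_nat_le1 m). pose proof (abs_ge0 HA (m%:R)%ring).
assert (0 < / INR p) by (apply Rinv_0_lt_compat; pose proof INR_p_gt1; lra). nra.
Qed.

Lemma abs_int_ndvd z : ~~ (p %| absz z)%nat -> abs (z%:~R)%ring = 1.
Proof. rewrite abs_intr. apply abs_cop. Qed.

Lemma dens x eps : 0 < eps -> exists (a : int) (b : nat), (0 < b)%nat /\
  abs (x - a%:~R / b%:R)%ring < eps.
Proof. destruct H as [_ [_ [_ [_ [_ [_ [H6 _]]]]]]]. apply H6. Qed.

End Qp.

Lemma intR_E z : intR z = (z%:~R : R)%ring.
Proof.
case: z => n; rewrite /intR; first by rewrite INRE.
by rewrite NegzE mulrNz INRE.
Qed.

Lemma evR_E P t : evR P t = ev P t.
Proof.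
rewrite /evR /ev map_polyE horner_Poly.
elim: (polyseq P) => [|c s IH] //=. by rewrite IH intR_E.
Qed.

Lemma AV_R : AV R Rabs.
Proof.
split; [|split; [|split]].
- intro x; apply Rabs_pos.
- intro x; split; [intro E; destruct (Req_dec x 0) as [h|h]; [exact h| apply Rabs_no_R0 in h; contradiction]| intros ->; apply Rabs_R0].
- intros x y; apply Rabs_mult.
- intros x y; apply Rabs_triang.
Qed.

Lemma charR (z : int) : (z%:~R : R)%ring = 0%ring -> z = 0%ring.
Proof. move/eqP. rewrite intr_eq0. by move/eqP. Qed.

Lemma evR_const (c : int) t : evR c%:P t = intR c.
Proof. by rewrite evR_E ev_const intR_E. Qed.

Lemma evR_X t : evR 'X t = t.
Proof. by rewrite evR_E ev_X. Qed.

Lemma evR_Xsub1 t : evR ('X - 1)%ring t = t - 1.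
Proof. by rewrite evR_E ev_Xsub1. Qed.

Lemma evR_cont P t eps : 0 < eps ->
  exists del, 0 < del /\ forall t', Rabs (t' - t) < del -> Rabs (Rabs (evR P t') - Rabs (evR P t)) < eps.
Proof.
intros He. destruct (abs_cont AV_R (map_poly (fun z : int => (z%:~R : R)%ring) P) t He) as [d [Hd H]].
exists d; split; auto. intros t' Ht. rewrite !evR_E. apply H. exact Ht.
Qed.

Section Z.
Local Open Scope ring_scope.

Lemma ratr_rat (s : rat) : ratr s = s.
Proof. exact: divq_num_den. Qed.

Lemma ev_ratr_eq0 (F : fieldType) (Hc : forall z : int, (z%:~R : F) = 0 -> z = 0)
  (P : {poly int}) (s : rat) :
  (ev P (ratr s : F) == 0) = (hom P (numq s) (denq s) == 0).
Proof.
have Hd : ((denq s)%:~R : F) != 0.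
  apply/eqP => /Hc /eqP. by rewrite denq_eq0.
have Hn : ((denq s)%:~R : F) ^+ size P != 0 by rewrite expf_neq0.
rewrite /ratr. move: (@ev_hom F P (numq s) _ Hd). set e := ev _ _. move=> E.
apply/eqP/eqP => [He|Hh].
- apply: Hc. by rewrite -E He mulr0.
- have : ((denq s)%:~R : F) ^+ size P * e == 0 by rewrite E Hh.
  rewrite mulf_eq0 (negbTE Hn) /=. by move/eqP.
Qed.

Lemma hom_rat_eq0 P (s : rat) : (ev P s == 0) = (hom P (numq s) (denq s) == 0).
Proof.
rewrite -{1}(ratr_rat s). apply: ev_ratr_eq0 => z /eqP. rewrite intr_eq0. by move/eqP.
Qed.

Lemma Fp_val (p : nat) (s : 'F_p) : s = ((val s)%:R : 'F_p).
Proof. by rewrite natr_Zp. Qed.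

Lemma ev_Fp (p : nat) (Hp : prime p) P (s : 'F_p) :
  (ev P s == 0) = (p %| absz (P.[(val s)%:Z]))%nat.
Proof.
have -> : ev P s = ev P (((val s)%:Z)%:~R : 'F_p) by congr (ev P _); exact: Fp_val.
rewrite ev_intr.
by rewrite -(dvdz_pcharf (pchar_Fp Hp)).
Qed.

End Z.

Definition cP (n : nat) : {poly int} := ((Posz n)%:P)%ring.

Lemma rpow_le1 x a : 0 <= x <= 1 -> 0 < a -> rpow x a <= 1.
Proof.
intros Hx Ha. destruct (Req_dec x 0) as [->|H0]. { rewrite rpow_0; lra. }
destruct (Req_dec x 1) as [->|H1]. { rewrite rpow_1; lra. }
left; apply rpow_lt1; lra.
Qed.

Lemma INR_prime_gt1 p : prime p -> 1 < INR p.
Proof. intros Hp. apply lt_1_INR. apply/ltP. exact: prime_gt1. Qed.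

Lemma mu_Q0_cP (s : rat) n : (0 < n)%nat -> mu_Q0 s (cP n) = 1.
Proof.
move=> Hn. rewrite /mu_Q0 /cP ev_const /rzero.
have -> : ((Posz n)%:~R == 0 :> rat)%ring = false.
{ apply/negbTE. rewrite intr_eq0. by rewrite -lt0n. }
by [].
Qed.

Lemma mu_Fp_cP p (Hp : prime p) (s : 'F_p) n :
  mu_Fp s (cP n) = if (p %| n)%nat then 0 else 1.
Proof.
rewrite /mu_Fp /cP ev_const /rzero.
by rewrite -(dvdz_pcharf (pchar_Fp Hp)).
Qed.

Lemma mu_R_cP v t n : mu_R v t (cP n) = rpow (INR n) v.
Proof. rewrite /mu_R /cP evR_const /=. rewrite Rabs_pos_eq //. apply pos_INR. Qed.

Section QpV.
Variables (p : nat) (K : fieldType) (abs : K -> R) (H : is_Qp p K abs) (Hp : prime p).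

Lemma mu_Qp_cP w s n : mu_Qp abs w s (cP n) = rpow (abs (n%:R)%ring) w.
Proof. by rewrite /mu_Qp /cP ev_const. Qed.

Lemma mu_Qp_p w s : 0 < w -> 0 < mu_Qp abs w s (cP p) < 1.
Proof.
intros Hw. rewrite mu_Qp_cP (abs_p H). pose proof (@INR_prime_gt1 p Hp).
assert (0 < / INR p < 1).
{ split. apply Rinv_0_lt_compat; lra. rewrite -Rinv_1. apply Rinv_lt_contravar; lra. }
split. apply rpow_gt0; lra. apply rpow_lt1; lra.
Qed.

Lemma mu_Qp_le1 w s n : 0 < w -> mu_Qp abs w s (cP n) <= 1.
Proof.
intros Hw. rewrite mu_Qp_cP. apply rpow_le1; auto. split. apply (abs_ge0 (HA H)). apply (abs_nat_le1 H).
Qed.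

Lemma mu_Qp_cop w s n : ~~ (p %| n)%nat -> mu_Qp abs w s (cP n) = 1.
Proof. intros Hn. rewrite mu_Qp_cP (abs_cop H _ Hn). apply rpow_1. Qed.

End QpV.

Section Cls.
Variables (Qp : nat -> fieldType) (absp : forall p, Qp p -> R)
  (HQp : forall p, prime p -> is_Qp p (Qp p) (absp p)).

Lemma vQ0 f : img Qp absp MQ0 f -> forall n, (0 < n)%nat -> f (cP n) = 1.
Proof. move=> [s ->] n Hn. exact: mu_Q0_cP. Qed.

Lemma vFp p f : prime p -> img Qp absp (MFp p) f -> forall n, f (cP n) = if (p %| n)%nat then 0 else 1.
Proof. move=> Hp [s ->] n. exact: mu_Fp_cP. Qed.

Lemma vR v f : img Qp absp (MR v) f -> forall n, f (cP n) = rpow (INR n) v.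
Proof. move=> [t ->] n. exact: mu_R_cP. Qed.

Lemma vQp p w f : prime p -> 0 < w -> img Qp absp (MQp p w) f ->
  (0 < f (cP p) < 1) /\ (forall n, ~~ (p %| n)%nat -> f (cP n) = 1) /\
  f (cP p) = rpow (/ INR p) w /\ (forall n, f (cP n) <= 1).
Proof.
move=> Hp Hw [s ->]. split; [|split; [|split]].
- exact: (mu_Qp_p (HQp _ Hp) Hp s Hw).
- move=> n Hn. exact: (mu_Qp_cop (HQp _ Hp)).
- by rewrite mu_Qp_cP (abs_p (HQp _ Hp)).
- move=> n. exact: (mu_Qp_le1 (HQp _ Hp)).
Qed.

Lemma rpowR_gt1 v n : 0 < v -> (1 < n)%nat -> 1 < rpow (INR n) v.
Proof. intros Hv Hn. apply rpow_gt1; auto. apply lt_1_INR. by apply/ltP. Qed.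

Lemma prime_ndvd p p' : prime p -> prime p' -> p <> p' -> ~~ (p %| p')%nat.
Proof. move=> Hp Hp' Hne. rewrite dvdn_prime2 //. by apply/eqP. Qed.

Lemma INR2 : INR 2 = 2. Proof. simpl; lra. Qed.

Lemma disj F G f : valid F -> valid G -> F <> G -> img Qp absp F f -> img Qp absp G f -> False.
Proof.
have p2 : prime 2 by [].
destruct F as [|p|v|p w]; destruct G as [|p'|v'|p' w']; simpl valid;
  move=> HF HG Hne HiF HiG; try (apply Hne; reflexivity).
- have := vQ0 HiF _ (prime_gt0 HG). rewrite (vFp HG HiG) dvdnn. lra.
- have := vQ0 HiF _ (isT : (0 < 2)%nat). rewrite (vR HiG). have := @rpowR_gt1 v' 2 (proj1 HG) isT. lra.
- have := vQ0 HiF _ (prime_gt0 (proj1 HG)). have [[_ ?] _] := vQp (proj1 HG) (proj2 HG) HiG. lra.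
- have := vQ0 HiG _ (prime_gt0 HF). rewrite (vFp HF HiF) dvdnn. lra.
- have Hpp : p <> p' by move=> E; apply Hne; rewrite E.
  have := vFp HF HiF p. have := vFp HG HiG p. rewrite dvdnn (negbTE (prime_ndvd HG HF (nesym Hpp))). lra.
- have := vFp HF HiF p. rewrite (vR HiG) dvdnn. have := @rpowR_gt1 v' p (proj1 HG) (prime_gt1 HF). lra.
- have := vFp HF HiF p'. have [[? ?] _] := vQp (proj1 HG) (proj2 HG) HiG. case: (p %| p')%nat; lra.
- have := vQ0 HiG _ (isT : (0 < 2)%nat). rewrite (vR HiF). have := @rpowR_gt1 v 2 (proj1 HF) isT. lra.
- have := vFp HG HiG p'. rewrite (vR HiF) dvdnn. have := @rpowR_gt1 v p' (proj1 HF) (prime_gt1 HG). lra.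
- have E1 := vR HiF 2. rewrite (vR HiG) INR2 in E1. apply Hne. f_equal.
  apply (@rpow_inj_exp 2); lra.
- have := vR HiF p'. have [[? ?] _] := vQp (proj1 HG) (proj2 HG) HiG. have := @rpowR_gt1 v p' (proj1 HF) (prime_gt1 (proj1 HG)). lra.
- have := vQ0 HiG _ (prime_gt0 (proj1 HF)). have [[_ ?] _] := vQp (proj1 HF) (proj2 HF) HiF. lra.
- have := vFp HG HiG p. have [[? ?] _] := vQp (proj1 HF) (proj2 HF) HiF. case: (p' %| p)%nat; lra.
- have := vR HiG p. have [[? ?] _] := vQp (proj1 HF) (proj2 HF) HiF. have := @rpowR_gt1 v' p (proj1 HG) (prime_gt1 (proj1 HF)). lra.
- have [[? ?] [_ [E1 _]]] := vQp (proj1 HF) (proj2 HF) HiF.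
  have [[? ?] [Hc [E2 _]]] := vQp (proj1 HG) (proj2 HG) HiG.
  case: (eqVneq p p') => [Epp|Npp].
  + subst p'. apply Hne. f_equal. apply (@rpow_inj_exp (/ INR p)).
    * apply Rinv_0_lt_compat. have := @INR_prime_gt1 p (proj1 HF). lra.
    * have := @INR_prime_gt1 p (proj1 HF). move=> h E. have : INR p = 1 by rewrite -(Rinv_inv (INR p)) E Rinv_1. lra.
    * by rewrite -E1 E2.
  + have := Hc p (prime_ndvd (proj1 HG) (proj1 HF) (nesym (elimN eqP Npp))). lra.
Qed.


Lemma UR_val g p : prime p -> U_R g -> 1 < g (cP p).
Proof. move=> Hp [v [t [Hv ->]]]. rewrite mu_R_cP. apply rpowR_gt1; [lra| exact: prime_gt1]. Qed.

Lemma UR_val2 g : U_R g -> 1 < g (cP 2).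
Proof. apply UR_val. by []. Qed.

Lemma Uq_val q g : prime q -> U_q Qp absp q g -> (0 < g (cP q) < 1) /\ forall n, g (cP n) <= 1.
Proof.
move=> Hq [w [s [Hw ->]]]. split. exact: (mu_Qp_p (HQp _ Hq) Hq s Hw).
move=> n. exact: (mu_Qp_le1 (HQp _ Hq)).
Qed.

Lemma L1 g : Amin Qp absp g -> g (cP 2) <= 1 \/ U_R g.
Proof.
move=> [[|p|v|p w] [HF Hi]]; simpl in HF.
- left. rewrite (vQ0 Hi _ (isT : (0 < 2)%nat)). lra.
- left. rewrite (vFp HF Hi). case: (p %| 2)%nat; lra.
- right. destruct Hi as [t ->]. exists v, t. split; auto.
- left. have [_ [_ [_ Hle]]] := vQp (proj1 HF) (proj2 HF) Hi. apply Hle.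
Qed.

Lemma L3 q g : prime q -> Amin Qp absp g -> 0 < g (cP q) < 1 -> U_q Qp absp q g.
Proof.
move=> Hq [[|p|v|p w] [HF Hi]] Hg; simpl in HF.
- rewrite (vQ0 Hi _ (prime_gt0 Hq)) in Hg. lra.
- rewrite (vFp HF Hi) in Hg. move: Hg; case: (p %| q)%nat => Hg; lra.
- rewrite (vR Hi) in Hg. have := @rpowR_gt1 v q (proj1 HF) (prime_gt1 Hq). lra.
- case: (eqVneq p q) => [Epq|Npq].
  + subst p. destruct Hi as [s ->]. exists w, s. split; [exact (proj2 HF)| reflexivity].
  + have [_ [Hc _]] := vQp (proj1 HF) (proj2 HF) Hi.
    rewrite (Hc q (prime_ndvd (proj1 HF) Hq (elimN eqP Npq))) in Hg. lra.
Qed.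

Lemma part_a : closed_in (Amin Qp absp) (img Qp absp MQ0).
Proof.
split. { move=> f Hf. exists MQ0. split; [exact I| exact Hf]. }
move=> f Hcl. have [[[|p|v|p w] [HF Hi]] _] := Hcl; simpl in HF.
- exact Hi.
- have := clos_ge _ _ _ (cP p) _ Hcl (fun g Hg => Req_le _ _ (Logic.eq_sym (vQ0 Hg _ (prime_gt0 HF)))).
  rewrite (vFp HF Hi) dvdnn. lra.
- have := clos_le _ _ _ (cP 2) _ Hcl (fun g Hg => Req_le _ _ (vQ0 Hg _ (isT : (0 < 2)%nat))).
  rewrite (vR Hi). have := @rpowR_gt1 v 2 (proj1 HF) isT. lra.
- have := clos_ge _ _ _ (cP p) _ Hcl (fun g Hg => Req_le _ _ (Logic.eq_sym (vQ0 Hg _ (prime_gt0 (proj1 HF))))).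
  have [[_ ?] _] := vQp (proj1 HF) (proj2 HF) Hi. lra.
Qed.

Lemma part_c_open : open_in (Amin Qp absp) U_R.
Proof.
split. { move=> f [v [t [Hv ->]]]. exists (MR v). split; [exact Hv| exists t; reflexivity]. }
move=> f Hf. have H2 := UR_val2 Hf.
exists (cP 2 :: nil), (f (cP 2) - 1). split; [lra|].
move=> g Hg Hn. have := Hn (cP 2) (in_eq _ _). move/Rabs_def2 => [h1 h2].
case: (L1 Hg) => // h. lra.
Qed.

Lemma part_c_clos1 f : closure_in (Amin Qp absp) U_R f -> U_R f \/ img Qp absp MQ0 f.
Proof.
move=> Hcl. have [[[|p|v|p w] [HF Hi]] _] := Hcl; simpl in HF.
- by right.
- have := clos_ge _ _ _ (cP p) _ Hcl (fun g Hg => Rlt_le _ _ (@UR_val g p HF Hg)). rewrite (vFp HF Hi) dvdnn. lra.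
- left. destruct Hi as [t ->]. exists v, t. split; auto.
- have := clos_ge _ _ _ (cP p) _ Hcl (fun g Hg => Rlt_le _ _ (@UR_val g p (proj1 HF) Hg)).
  have [[_ ?] _] := vQp (proj1 HF) (proj2 HF) Hi. lra.
Qed.

Lemma part_d_open q : prime q -> open_in (Amin Qp absp) (U_q Qp absp q).
Proof.
move=> Hq. split. { move=> f [w [s [Hw ->]]]. exists (MQp q w). split; [split; auto| exists s; reflexivity]. }
move=> f Hf. have [[h1 h2] _] := Uq_val Hq Hf.
exists (cP q :: nil), (Rmin (f (cP q)) (1 - f (cP q))). split. { apply Rmin_pos; lra. }
move=> g Hg Hn. apply: (@L3 q g Hq Hg). have := Hn (cP q) (in_eq _ _). move/Rabs_def2 => [k1 k2].
have := Rmin_l (f (cP q)) (1 - f (cP q)). have := Rmin_r (f (cP q)) (1 - f (cP q)). lra.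
Qed.

End Cls.

Lemma mu_Q0_hom (s : rat) P : mu_Q0 s P = if (hom P (numq s) (denq s) == 0)%ring then 0 else 1.
Proof. by rewrite /mu_Q0 /rzero hom_rat_eq0. Qed.

Lemma small_pos d : 0 < d -> 0 < d / 2 < d.
Proof. intros; lra. Qed.

Section Cons.
Variables (Qp : nat -> fieldType) (absp : forall p, Qp p -> R)
  (HQp : forall p, prime p -> is_Qp p (Qp p) (absp p)).

Lemma part_h q f : prime q -> img Qp absp MQ0 f -> closure_in (Amin Qp absp) (U_q Qp absp q) f.
Proof.
move=> Hq Hf. split. { exists MQ0. split; [exact I| exact Hf]. }
destruct Hf as [s ->]. move=> Ps eps He.
set x : Qp q := ratr s.
have HK := HQp _ Hq.
have Hz : forall P, (ev P x == 0)%ring = (hom P (numq s) (denq s) == 0)%ring.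
{ move=> P. apply: ev_ratr_eq0. exact: (charK HK Hq). }
have [d [Hd HQ]] : exists d, 0 < d /\ forall P, In P Ps -> forall w, 0 < w < d ->
    Rabs (mu_Qp (absp q) w x P - mu_Q0 s P) < eps.
{ apply list_min.
  - move=> P d d' HP Hd' w Hw. apply HP. lra.
  - move=> P _. rewrite mu_Q0_hom /mu_Qp -Hz.
    case: eqP => [E|E].
    + exists 1. split; [lra|]. move=> w _. rewrite E (abs0 (HA HK)) rpow_0 Rminus_0_r Rabs_R0. exact He.
    + have Hpos : 0 < absp q (ev P x) by apply: (abs_neq0 (HA HK)).
      have [d [Hd Hr]] := rpow_to1 _ Hpos _ He. exists d. split; auto. }
exists (mu_Qp (absp q) (d / 2) x). split.
- exists (d / 2), x. split; [lra| reflexivity].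
- move=> P HP. apply HQ; auto. lra.
Qed.

Lemma part_e q f : prime q -> img Qp absp (MFp q) f -> closure_in (Amin Qp absp) (U_q Qp absp q) f.
Proof.
move=> Hq Hf. split. { exists (MFp q). split; [exact Hq| exact Hf]. }
destruct Hf as [s ->]. move=> Ps eps He.
have HK := HQp _ Hq.
set x : Qp q := (((val s)%:Z)%:~R)%ring.
have [A HQ] : exists A, forall P, In P Ps -> forall w, A < w ->
    Rabs (mu_Qp (absp q) w x P - mu_Fp s P) < eps.
{ apply list_max.
  - move=> P A A' HP HA' w Hw. apply HP. lra.
  - move=> P _. rewrite /mu_Fp /rzero (ev_Fp _ Hq) /mu_Qp /x ev_intr.
    case E: (q %| absz (P.[(val s)%:Z])%ring)%nat.
    + have Hle := abs_int_dvd HK Hq _ E.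
      have Hq1 := @INR_prime_gt1 q Hq.
      have Hlt : / INR q < 1. { rewrite -Rinv_1. apply Rinv_lt_contravar; lra. }
      have H0 := abs_ge0 (HA HK) ((P.[(val s)%:Z])%:~R)%ring.
      have [A [HA0 HA1]] := @rpow_to0 (absp q ((P.[(val s)%:Z])%:~R)%ring) (conj H0 (Rle_lt_trans _ _ _ Hle Hlt)) eps He.
      exists A. move=> w Hw. rewrite Rminus_0_r Rabs_pos_eq; [|apply rpow_ge0]. apply HA1; lra.
    + exists 0. move=> w Hw. rewrite (abs_int_ndvd HK _ (negbT E)) rpow_1 Rminus_diag Rabs_R0. exact He. }
exists (mu_Qp (absp q) (Rabs A + 1) x). split.
- exists (Rabs A + 1), x. split; [pose proof (Rabs_pos A); lra| reflexivity].
- move=> P HP. apply HQ; auto. pose proof (Rle_abs A); lra.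
Qed.


Lemma ndvd_small p m : (0 < m)%nat -> (m < p)%nat -> ~~ (p %| m)%nat.
Proof. move=> Hm Hmp. apply/negP => Hd. have := dvdn_leq Hm Hd. by rewrite leqNgt Hmp. Qed.

Definition bnd (s : rat) (Ps : list {poly int}) : nat :=
  fold_right (fun P m => maxn (absz (hom P (numq s) (denq s))) m) (absz (denq s)) Ps.

Lemma bnd_d s Ps : (absz (denq s) <= bnd s Ps)%nat.
Proof. elim: Ps => [|P Ps IH] //=. by rewrite leq_max IH orbT. Qed.

Lemma bnd_P s Ps P : In P Ps -> (absz (hom P (numq s) (denq s)) <= bnd s Ps)%nat.
Proof.
elim: Ps => [|P0 Ps IH] //= [<-|HP]; first by rewrite leq_max leqnn.
by rewrite leq_max IH ?orbT.
Qed.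

Lemma part_f f : img Qp absp MQ0 f ->
  closure_in (Amin Qp absp) (fun g => exists p, prime p /\ img Qp absp (MQp p 1) g) f.
Proof.
move=> Hf. split. { exists MQ0. split; [exact I| exact Hf]. }
destruct Hf as [s ->]. move=> Ps eps He.
case: (prime_above (bnd s Ps)) => p Hlt Hp.
have HK := HQp _ Hp.
set x : Qp p := ratr s.
exists (mu_Qp (absp p) 1 x). split. { exists p. split; auto. exists x. reflexivity. }
move=> P HP.
suff -> : mu_Qp (absp p) 1 x P = mu_Q0 s P by rewrite Rminus_diag Rabs_R0.
rewrite mu_Q0_hom /mu_Qp.
have Hz : (ev P x == 0)%ring = (hom P (numq s) (denq s) == 0)%ring.
{ apply: ev_ratr_eq0. exact: (charK HK Hp). }
case Eh0 : (hom P (numq s) (denq s) == 0)%ring; rewrite Eh0 in Hz.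
- move/eqP: Hz => Hz. by rewrite Hz (abs0 (HA HK)) rpow_0.
- have Hd : (((denq s)%:~R : Qp p) != 0)%ring.
  { apply/eqP => /(charK HK Hp) /eqP. by rewrite denq_eq0. }
  have E := @ev_hom (Qp p) P (numq s) (denq s) Hd.
  have Ed : absp p (((denq s)%:~R : Qp p))%ring = 1.
  { apply: (abs_int_ndvd HK). apply: ndvd_small; first by rewrite absz_gt0 denq_eq0.
    apply: (leq_ltn_trans _ Hlt). exact: bnd_d. }
  have Eh : absp p (((hom P (numq s) (denq s))%:~R : Qp p))%ring = 1.
  { apply: (abs_int_ndvd HK). apply: ndvd_small; first by rewrite absz_gt0 Eh0.
    apply: (leq_ltn_trans _ Hlt). exact: bnd_P. }
  have : absp p ((((denq s)%:~R : Qp p) ^+ size P * ev P x))%ring = 1 by rewrite /x E Eh.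
  rewrite (absM (HA HK)) (abs_expr HK) Ed pow1 Rmult_1_l => ->. by rewrite rpow_1.
Qed.

Lemma part_c_Q0 f : img Qp absp MQ0 f -> closure_in (Amin Qp absp) U_R f.
Proof.
move=> Hf. split. { exists MQ0. split; [exact I| exact Hf]. }
destruct Hf as [s ->]. move=> Ps eps He.
set t : R := ratr s.
have Hz : forall P, (ev P t == 0)%ring = (hom P (numq s) (denq s) == 0)%ring.
{ move=> P. apply: ev_ratr_eq0. exact: charR. }
have [d [Hd HQ]] : exists d, 0 < d /\ forall P, In P Ps -> forall v, 0 < v < d ->
    Rabs (mu_R v t P - mu_Q0 s P) < eps.
{ apply list_min.
  - move=> P d d' HP Hd' v Hv. apply HP. lra.
  - move=> P _. rewrite mu_Q0_hom /mu_R evR_E -Hz.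
    case: eqP => [E|E].
    + exists 1. split; [lra|]. move=> v _. rewrite E Rabs_R0 rpow_0 Rminus_0_r Rabs_R0. exact He.
    + have Hpos : 0 < Rabs (ev P t) by apply: (abs_neq0 AV_R).
      have [d [Hd Hr]] := rpow_to1 _ Hpos _ He. exists d. split; auto. }
exists (mu_R (Rmin (d / 2) 1) t). split.
- exists (Rmin (d / 2) 1), t. split; [|reflexivity].
  split; [apply Rmin_pos; lra| apply Rmin_r].
- move=> P HP. apply HQ; auto. split; [apply Rmin_pos; lra|].
  eapply Rle_lt_trans; [apply Rmin_l| lra].
Qed.

End Cons.

Lemma inv_close w w' d : 0 < w -> 0 < d -> Rabs (w' - w) < Rmin (w / 2) (d * (w * w) / 2) ->
  Rabs (/ w' - / w) < d.
Proof.
intros Hw Hd H. have H1 := Rlt_le_trans _ _ _ H (Rmin_l _ _). have H2 := Rlt_le_trans _ _ _ H (Rmin_r _ _).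
apply Rabs_def2 in H1. have Hw' : w / 2 < w' by lra.
replace (/ w' - / w) with ((w - w') / (w * w')) by (field; lra).
unfold Rdiv. rewrite Rabs_mult Rabs_inv (Rabs_pos_eq (w * w')); [|nra]. fold (Rabs (w - w') / (w * w')).
rewrite Rabs_minus_sym. apply (Rmult_lt_reg_r (w * w')); [nra|].
unfold Rdiv. rewrite Rmult_assoc Rinv_l; [|nra]. rewrite Rmult_1_r.
assert (d * (w * w) / 2 <= d * (w * w')).
{ have := Rmult_lt_0_compat (d * w) (w' - w / 2) ltac:(nra) ltac:(lra). nra. }
lra.
Qed.

Lemma exp_recover x a eta : 0 < x -> x <> 1 -> 0 < eta ->
  exists d, 0 < d /\ forall a', Rabs (rpow x a' - rpow x a) < d -> Rabs (a' - a) < eta.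
Proof.
intros Hx H1 He.
have HL : ln x <> 0. { intro E. apply H1. rewrite -(exp_ln x Hx) E exp_0. reflexivity. }
have HL' : 0 < Rabs (ln x) by apply Rabs_pos_lt.
have [d [Hd Hc]] := ln_cont_eps _ (rpow_gt0 x a (Rgt_not_eq _ _ Hx)) _ (Rmult_lt_0_compat _ _ He HL').
exists d. split; auto. intros a' Ha'.
have [_ Hl] := Hc _ Ha'. rewrite !rpow_ln in Hl; auto.
replace (a' * ln x - a * ln x) with ((a' - a) * ln x) in Hl by ring.
rewrite Rabs_mult in Hl. apply (Rmult_lt_reg_r (Rabs (ln x))); auto.
Qed.

Lemma recover_t t t' e : 0 < e <= 1 -> Rabs (Rabs t' - Rabs t) < e ->
  Rabs (Rabs (t' - 1) - Rabs (t - 1)) < e -> Rabs (t' - t) < e * (Rabs t + Rabs (t - 1) + 1).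
Proof.
intros He H1 H2.
have E : t' - t = ((Rabs t' - Rabs t) * (Rabs t' + Rabs t) - (Rabs (t' - 1) - Rabs (t - 1)) * (Rabs (t' - 1) + Rabs (t - 1))) / 2.
{ have e1 : Rabs t' * Rabs t' = t' * t' by unfold Rabs; destruct (Rcase_abs t'); ring.
  have e2 : Rabs t * Rabs t = t * t by unfold Rabs; destruct (Rcase_abs t); ring.
  have e3 : Rabs (t' - 1) * Rabs (t' - 1) = (t' - 1) * (t' - 1) by unfold Rabs; destruct (Rcase_abs (t' - 1)); ring.
  have e4 : Rabs (t - 1) * Rabs (t - 1) = (t - 1) * (t - 1) by unfold Rabs; destruct (Rcase_abs (t - 1)); ring.
  transitivity ((Rabs t' * Rabs t' - Rabs t * Rabs t - (Rabs (t' - 1) * Rabs (t' - 1) - Rabs (t - 1) * Rabs (t - 1))) / 2).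
  { rewrite e1 e2 e3 e4. field. }
  field. }
rewrite E. apply Rabs_def2 in H1. apply Rabs_def2 in H2.
have P1 := Rabs_pos t. have P2 := Rabs_pos (t - 1). have P3 := Rabs_pos t'. have P4 := Rabs_pos (t' - 1).
apply Rabs_def1; nra.
Qed.

Lemma dRR_eq0 a b : dRR a b = 0 -> a = b.
Proof.
destruct a as [a1 a2], b as [b1 b2]. unfold dRR; simpl. intro H.
have h1 := Rmax_l (Rabs (a1 - b1)) (Rabs (a2 - b2)). have h2 := Rmax_r (Rabs (a1 - b1)) (Rabs (a2 - b2)).
have := Rabs_pos (a1 - b1). have := Rabs_pos (a2 - b2). move=> p1 p2.
have E1 : Rabs (a1 - b1) = 0 by lra. have E2 : Rabs (a2 - b2) = 0 by lra.
have F1 : a1 = b1. { destruct (Req_dec (a1 - b1) 0); [lra|]. apply Rabs_no_R0 in H0. contradiction. }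
have F2 : a2 = b2. { destruct (Req_dec (a2 - b2) 0); [lra|]. apply Rabs_no_R0 in H0. contradiction. }
by rewrite F1 F2.
Qed.

Lemma inj_from_inv {A : Type} (D : A -> Prop) (d : A -> A -> R) (h : A -> Sn) :
  (forall a b, 0 <= d a b) -> (forall a b, d a b = 0 -> a = b) ->
  (forall a, D a -> forall eps, 0 < eps -> exists Ps del, 0 < del /\
     forall b, D b -> nbhd (h a) Ps del (h b) -> d a b < eps) ->
  forall a b, D a -> D b -> h a = h b -> a = b.
Proof.
intros Hp H0 Hi a b Ha Hb E. apply H0.
destruct (Hp a b) as [Hlt|Heq]; [|symmetry; exact Heq]. exfalso.
destruct (Hi a Ha (d a b) Hlt) as [Ps [del [Hd Hn]]].
have := Hn b Hb. rewrite E. move=> HH. have := HH (fun P _ => ltac:(rewrite Rminus_diag Rabs_R0; exact Hd)). lra.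
Qed.

Lemma dRR_ge0 a b : 0 <= dRR a b.
Proof. unfold dRR. eapply Rle_trans; [apply Rabs_pos| apply Rmax_l]. Qed.

Lemma dRR_lt a b d : dRR a b < d -> Rabs (fst b - fst a) < d /\ Rabs (snd b - snd a) < d.
Proof.
unfold dRR. intro H. rewrite (Rabs_minus_sym (fst b)) (Rabs_minus_sym (snd b)). split.
- eapply Rle_lt_trans; [apply Rmax_l| exact H].
- eapply Rle_lt_trans; [apply Rmax_r| exact H].
Qed.

Lemma fwdR : forall a : R * R, 0 < fst a <= 1 -> forall Ps eps, 0 < eps ->
  exists del, 0 < del /\ forall b : R * R, 0 < fst b <= 1 -> dRR a b < del ->
    nbhd (mu_R (fst a) (snd a)) Ps eps (mu_R (fst b) (snd b)).
Proof.
move=> [v t] /= Hv Ps eps He.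
suff [d [Hd HQ]] : exists d, 0 < d /\ forall P, In P Ps -> forall b : R * R, 0 < fst b <= 1 -> dRR (v, t) b < d ->
   Rabs (mu_R (fst b) (snd b) P - mu_R v t P) < eps.
{ exists d. split; auto. move=> b Hb Hdb P HP. exact: HQ. }
apply (list_min Ps (fun P d => forall b : R * R, 0 < fst b <= 1 -> dRR (v, t) b < d ->
   Rabs (mu_R (fst b) (snd b) P - mu_R v t P) < eps)).
- move=> P d d' HP Hd' b Hb Hdb. apply HP; auto. lra.
- move=> P _.
  have [d1 [Hd1 H1]] := rpow_cont _ _ (Rabs_pos (evR P t)) (proj1 Hv) _ He.
  have [d2 [Hd2 H2]] := evR_cont P t Hd1.
  exists (Rmin d1 d2). split. { apply Rmin_pos; auto. }
  move=> [v' t'] /= Hv' Hdb. have [k1 k2] := dRR_lt _ _ Hdb. simpl in k1, k2.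
  rewrite /mu_R. apply H1.
  + apply Rabs_pos.
  + apply H2. eapply Rlt_le_trans; [exact k2| apply Rmin_r].
  + eapply Rlt_le_trans; [exact k1| apply Rmin_l].
Qed.

Lemma invR : forall a : R * R, 0 < fst a <= 1 -> forall eps, 0 < eps ->
  exists Ps del, 0 < del /\ forall b : R * R, 0 < fst b <= 1 ->
    nbhd (mu_R (fst a) (snd a)) Ps del (mu_R (fst b) (snd b)) -> dRR a b < eps.
Proof.
move=> [v t] /= Hv eps He.
set C := Rabs t + Rabs (t - 1) + 1.
have HC : 0 < C by (unfold C; have := Rabs_pos t; have := Rabs_pos (t - 1); lra).
set e := Rmin 1 (eps / C).
have He1 : 0 < e by (apply Rmin_pos; [lra| apply Rdiv_lt_0_compat; lra]).
have HeC : e * C <= eps.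
{ have : e <= eps / C by apply Rmin_r. move=> h. apply (Rmult_le_compat_r C) in h; [|lra].
  replace (eps / C * C) with eps in h by (field; lra). exact h. }
have Hv1 : 0 < / v by apply Rinv_0_lt_compat; lra.
have [d2 [Hd2 H2]] := rpow_cont _ _ (rpow_ge0 (Rabs t) v) Hv1 _ He1.
have [d3 [Hd3 H3]] := rpow_cont _ _ (rpow_ge0 (Rabs (t - 1)) v) Hv1 _ He1.
set dd := Rmin d2 d3.
have Hdd : 0 < dd by apply Rmin_pos.
set eta := Rmin eps (Rmin (v / 2) (dd * (v * v) / 2)).
have Heta : 0 < eta. { apply Rmin_pos; auto. apply Rmin_pos; [lra|]. have : 0 < v * v by nra. move=> h. apply Rdiv_lt_0_compat; nra. }
have [d1 [Hd1 H1]] := @exp_recover 2 v eta ltac:(lra) ltac:(lra) Heta.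
exists (cP 2 :: ('X)%ring :: ('X - 1)%ring :: nil), (Rmin d1 dd). split. { apply Rmin_pos; auto. }
move=> [v' t'] /= Hv' Hn.
have N2 := Hn (cP 2) ltac:(simpl; auto). have NX := Hn ('X)%ring ltac:(simpl; auto).
have N1 := Hn ('X - 1)%ring ltac:(simpl; auto).
rewrite !mu_R_cP INR2 in N2.
rewrite /mu_R evR_X evR_X in NX. rewrite /mu_R evR_Xsub1 evR_Xsub1 in N1.
have Hvv : Rabs (v' - v) < eta by (apply H1; eapply Rlt_le_trans; [exact N2| apply Rmin_l]).
have Hve : Rabs (v' - v) < eps by (eapply Rlt_le_trans; [exact Hvv| apply Rmin_l]).
have Hinv : Rabs (/ v' - / v) < dd.
{ apply inv_close; auto; try lra. eapply Rlt_le_trans; [exact Hvv| apply Rmin_r]. }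
have Hv'0 : v' <> 0 by lra. have Hv0 : v <> 0 by lra.
have Ht : Rabs (Rabs t' - Rabs t) < e.
{ rewrite -{1}(rpow_inv _ _ (Rabs_pos t') Hv'0) -{1}(rpow_inv _ _ (Rabs_pos t) Hv0).
  apply H2.
  - apply rpow_ge0.
  - eapply Rlt_le_trans; [exact NX|]. eapply Rle_trans; [apply Rmin_r| apply Rmin_l].
  - eapply Rlt_le_trans; [exact Hinv| apply Rmin_l]. }
have Ht1 : Rabs (Rabs (t' - 1) - Rabs (t - 1)) < e.
{ rewrite -{1}(rpow_inv _ _ (Rabs_pos (t' - 1)) Hv'0) -{1}(rpow_inv _ _ (Rabs_pos (t - 1)) Hv0).
  apply H3.
  - apply rpow_ge0.
  - eapply Rlt_le_trans; [exact N1|]. eapply Rle_trans; [apply Rmin_r| apply Rmin_r].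
  - eapply Rlt_le_trans; [exact Hinv| apply Rmin_r]. }
have Htt : Rabs (t' - t) < e * C by (apply recover_t; auto; split; [exact He1| apply Rmin_l]).
unfold dRR; simpl. apply Rmax_lub_lt.
- rewrite Rabs_minus_sym. exact Hve.
- rewrite Rabs_minus_sym. lra.
Qed.

Lemma homeo_R : homeo_onto (fun a : R * R => 0 < fst a <= 1) dRR
  (fun a => mu_R (fst a) (snd a)) U_R.
Proof.
split; [|split; [|split; [|split]]].
- move=> [v t] /= Hv. exists v, t. split; auto.
- move=> f [v [t [Hv ->]]]. exists (v, t). split; auto.
- exact (@inj_from_inv _ _ dRR _ dRR_ge0 dRR_eq0 invR).
- exact fwdR.
- exact invR.
Qed.

Section HQ.
Variables (q : nat) (K : fieldType) (abs : K -> R) (H : is_Qp q K abs) (Hq : prime q).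

Let HA' := HA H.

Lemma dRK_ge0 a b : 0 <= dRK abs a b.
Proof. unfold dRK. eapply Rle_trans; [apply Rabs_pos| apply Rmax_l]. Qed.

Lemma dRK_eq0 a b : dRK abs a b = 0 -> a = b.
Proof.
destruct a as [a1 a2], b as [b1 b2]. unfold dRK, rsub; simpl. intro E.
have h1 := Rmax_l (Rabs (a1 - b1)) (abs (a2 - b2)%ring). have h2 := Rmax_r (Rabs (a1 - b1)) (abs (a2 - b2)%ring).
have p1 := Rabs_pos (a1 - b1). have p2 := abs_ge0 HA' (a2 - b2)%ring.
have E1 : Rabs (a1 - b1) = 0 by lra. have E2 : abs (a2 - b2)%ring = 0 by lra.
have F1 : a1 = b1. { destruct (Req_dec (a1 - b1) 0) as [h|h]; [lra|]. apply Rabs_no_R0 in h. contradiction. }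
have F2 : a2 = b2. { apply (abs_eq0 HA') in E2. apply/eqP. by rewrite -subr_eq0 E2. }
by rewrite F1 F2.
Qed.

Lemma dRK_lt a b d : dRK abs a b < d -> Rabs (fst b - fst a) < d /\ abs (snd b - snd a)%ring < d.
Proof.
unfold dRK, rsub. intro E. rewrite (Rabs_minus_sym (fst b)) (absB_sym HA' (snd b)). split.
- eapply Rle_lt_trans; [apply Rmax_l| exact E].
- eapply Rle_lt_trans; [apply Rmax_r| exact E].
Qed.

Lemma fwdQ : forall a : R * K, 0 < fst a -> forall Ps eps, 0 < eps ->
  exists del, 0 < del /\ forall b : R * K, 0 < fst b -> dRK abs a b < del ->
    nbhd (mu_Qp abs (fst a) (snd a)) Ps eps (mu_Qp abs (fst b) (snd b)).
Proof.
move=> [w s] /= Hw Ps eps He.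
suff [d [Hd HQ]] : exists d, 0 < d /\ forall P, In P Ps -> forall b : R * K, 0 < fst b -> dRK abs (w, s) b < d ->
   Rabs (mu_Qp abs (fst b) (snd b) P - mu_Qp abs w s P) < eps.
{ exists d. split; auto. move=> b Hb Hdb P HP. exact: HQ. }
apply (list_min Ps (fun P d => forall b : R * K, 0 < fst b -> dRK abs (w, s) b < d ->
   Rabs (mu_Qp abs (fst b) (snd b) P - mu_Qp abs w s P) < eps)).
- move=> P d d' HP Hd' b Hb Hdb. apply HP; auto. lra.
- move=> P _.
  have [d1 [Hd1 H1]] := rpow_cont _ _ (abs_ge0 HA' (ev P s)) Hw _ He.
  have [d2 [Hd2 H2]] := abs_cont HA' (map_poly (fun z : int => (z%:~R : K)%ring) P) s Hd1.
  exists (Rmin d1 d2). split. { apply Rmin_pos; auto. }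
  move=> [w' s'] /= Hw' Hdb. have [k1 k2] := dRK_lt _ _ Hdb. simpl in k1, k2.
  rewrite /mu_Qp. apply H1.
  + apply (abs_ge0 HA').
  + apply H2. eapply Rlt_le_trans; [exact k2| apply Rmin_r].
  + eapply Rlt_le_trans; [exact k1| apply Rmin_l].
Qed.

Lemma invQ : forall a : R * K, 0 < fst a -> forall eps, 0 < eps ->
  exists Ps del, 0 < del /\ forall b : R * K, 0 < fst b ->
    nbhd (mu_Qp abs (fst a) (snd a)) Ps del (mu_Qp abs (fst b) (snd b)) -> dRK abs a b < eps.
Proof.
move=> [w s] /= Hw eps He.
have He2 : 0 < eps / 2 by lra.
have [a0 [b0 [Hb0 Hr]]] := dens H s He2.
set r : K := (a0%:~R / b0%:R)%ring.
set Pr : {poly int} := ((Posz b0)%:P * 'X - a0%:P)%ring.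
have HB : 0 < abs (b0%:R)%ring := abs_nat_pos H Hq _ Hb0.
have Hb0K : (b0%:R : K)%ring <> 0%ring by move=> E; rewrite E (abs0 HA') in HB; lra.
have Key : forall x, abs (ev Pr x) = abs (b0%:R)%ring * abs (x - r)%ring.
{ move=> x. rewrite /Pr ev_lin -(absM HA'). f_equal.
  have E : ((b0%:R : K) * (x - r) = b0%:R * x - a0%:~R)%ring.
  { rewrite mulrBr /r mulrCA divff ?mulr1 //. by apply/eqP. }
  by rewrite E. }
have Hwi : 0 < / w by apply Rinv_0_lt_compat.
have He3 : 0 < abs (b0%:R)%ring * (eps / 2) by apply Rmult_lt_0_compat.
have [d2 [Hd2 H2]] := rpow_cont _ _ (rpow_ge0 (abs (ev Pr s)) w) Hwi _ He3.
set eta := Rmin eps (Rmin (w / 2) (d2 * (w * w) / 2)).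
have Heta : 0 < eta. { apply Rmin_pos; auto. apply Rmin_pos; [lra|]. apply Rdiv_lt_0_compat; [|lra]. apply Rmult_lt_0_compat; nra. }
have Hq1 := @INR_prime_gt1 q Hq.
have Hiq : 0 < / INR q by apply Rinv_0_lt_compat; lra.
have Hiq1 : / INR q <> 1. { move=> E. have : INR q = 1 by rewrite -(Rinv_inv (INR q)) E Rinv_1. lra. }
have [d1 [Hd1 H1]] := @exp_recover (/ INR q) w eta Hiq Hiq1 Heta.
exists (cP q :: Pr :: nil), (Rmin d1 d2). split. { apply Rmin_pos; auto. }
move=> [w' s'] /= Hw' Hn.
have Nq := Hn (cP q) ltac:(simpl; auto). have Nr := Hn Pr ltac:(simpl; auto).
rewrite !mu_Qp_cP (abs_p H) in Nq.
have Hww : Rabs (w' - w) < eta by (apply H1; eapply Rlt_le_trans; [exact Nq| apply Rmin_l]).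
have Hwe : Rabs (w' - w) < eps by (eapply Rlt_le_trans; [exact Hww| apply Rmin_l]).
have Hinv : Rabs (/ w' - / w) < d2.
{ apply inv_close; auto. eapply Rlt_le_trans; [exact Hww| apply Rmin_r]. }
have Hw'0 : w' <> 0 by lra. have Hw0 : w <> 0 by lra.
have Habs : Rabs (abs (ev Pr s') - abs (ev Pr s)) < abs (b0%:R)%ring * (eps / 2).
{ rewrite -{1}(rpow_inv _ _ (abs_ge0 HA' (ev Pr s')) Hw'0) -{1}(rpow_inv _ _ (abs_ge0 HA' (ev Pr s)) Hw0).
  apply H2.
  - apply rpow_ge0.
  - rewrite /mu_Qp in Nr. eapply Rlt_le_trans; [exact Nr| apply Rmin_r].
  - exact Hinv. }
rewrite !Key in Habs. apply Rabs_def2 in Habs.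
have Hsr : abs (s' - r)%ring < eps.
{ apply (Rmult_lt_reg_l (abs (b0%:R)%ring)); auto.
  have Hc : abs (b0%:R)%ring * abs (s - r)%ring < abs (b0%:R)%ring * (eps / 2) by apply Rmult_lt_compat_l.
  set B := abs (b0%:R)%ring in Habs Hc *. set X1 := abs (s' - r)%ring in Habs Hc *.
  set X2 := abs (s - r)%ring in Habs Hc *. clearbody B X1 X2. lra. }
have Hss : abs (s - s')%ring < eps.
{ have -> : (s - s' = (s - r) + (r - s'))%ring by rewrite addrA subrK.
  eapply Rle_lt_trans; [apply (ultra H)|]. rewrite (absB_sym HA' r). apply Rmax_lub_lt; [eapply Rlt_trans; [exact Hr| lra]| exact Hsr]. }
unfold dRK, rsub; simpl. apply Rmax_lub_lt.
- rewrite Rabs_minus_sym. exact Hwe.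
- exact Hss.
Qed.

Lemma homeo_Qp : homeo_onto (fun a : R * K => 0 < fst a) (@dRK K abs)
  (fun a => mu_Qp abs (fst a) (snd a)) (fun f => exists w s, 0 < w /\ f = mu_Qp abs w s).
Proof.
split; [|split; [|split; [|split]]].
- move=> [w s] /= Hw. exists w, s. split; auto.
- move=> f [w [s [Hw ->]]]. exists (w, s). split; auto.
- exact (@inj_from_inv _ _ (@dRK K abs) _ dRK_ge0 dRK_eq0 invQ).
- exact fwdQ.
- exact invQ.
Qed.

End HQ.

Unset Implicit Arguments.

Theorem lemma3p5 (Qp : nat -> fieldType) (absp : forall p, Qp p -> R)
  (HQp : forall p, prime p -> is_Qp p (Qp p) (absp p)) :
  (* (a) *)
  closed_in (Amin Qp absp) (img Qp absp MQ0) /\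
  (* (b) *)
  (forall F G, valid F -> valid G -> F <> G ->
     forall f, ~ (img Qp absp F f /\ img Qp absp G f)) /\
  (* (c) *)
  (homeo_onto (fun a : R * R => 0 < fst a <= 1) dRR
     (fun a => mu_R (fst a) (snd a)) U_R /\
   open_in (Amin Qp absp) U_R /\
   (forall f, closure_in (Amin Qp absp) U_R f <->
              U_R f \/ img Qp absp MQ0 f)) /\
  (* (d) *)
  (forall q, prime q ->
     open_in (Amin Qp absp) (U_q Qp absp q) /\
     homeo_onto (fun a : R * Qp q => 0 < fst a) (@dRK (Qp q) (absp q))
       (fun a => mu_Qp (absp q) (fst a) (snd a)) (U_q Qp absp q)) /\
  (* (e) *)
  (forall q, prime q -> forall f, img Qp absp (MFp q) f ->
     closure_in (Amin Qp absp) (U_q Qp absp q) f) /\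
  (* (f) *)
  (forall f, img Qp absp MQ0 f ->
     closure_in (Amin Qp absp)
       (fun g => exists p, prime p /\ img Qp absp (MQp p 1) g) f) /\
  (* (g) *)
  (forall f, closure_in (Amin Qp absp)
                (fun g => exists p, prime p /\ U_q Qp absp p g) f <->
     img Qp absp MQ0 f \/ (exists p, prime p /\ img Qp absp (MFp p) f) \/
     (exists p, prime p /\ U_q Qp absp p f)) /\
  (* (h) *)
  (forall q, prime q -> forall f, img Qp absp MQ0 f ->
     closure_in (Amin Qp absp) (U_q Qp absp q) f).
Proof.
split; [exact (part_a Qp absp HQp)|].
split.
{ move=> F G HF HG Hne f [H1 H2]. exact (disj Qp absp HQp f HF HG Hne H1 H2). }
split.
{ split; [exact homeo_R|]. split; [exact (part_c_open Qp absp HQp)|].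
  move=> f. split; [exact (@part_c_clos1 Qp absp HQp f)|].
  move=> [Hf|Hf].
  - apply clos_self; auto. destruct Hf as [v [t [Hv ->]]]. exists (MR v). split; [exact Hv| exists t; reflexivity].
  - exact (part_c_Q0 Hf). }
split.
{ move=> q Hq. split; [exact (part_d_open Qp absp HQp q Hq)|]. exact (homeo_Qp (HQp q Hq) Hq). }
split.
{ move=> q Hq f Hf. exact (part_e HQp Hq Hf). }
split.
{ move=> f Hf. exact (part_f HQp Hf). }
split.
{ move=> f. split.
  - move=> Hcl. have [[[|p|v|p w] [HF Hi]] _] := Hcl; simpl in HF.
    + by left.
    + right; left. exists p. split; auto.
    + exfalso. have := clos_le _ _ _ (cP 2) 1 Hcl (fun g Hg => ltac:(destruct Hg as [p [Hp Hg]]; exact (proj2 (Uq_val HQp Hp Hg) 2%nat))).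
      rewrite (vR Hi) INR2. have := @rpowR_gt1 v 2 (proj1 HF) isT. rewrite INR2. lra.
    + right; right. exists p. split; [exact (proj1 HF)|]. destruct Hi as [s ->]. exists w, s. split; [exact (proj2 HF)| reflexivity].
  - move=> [Hf|[[p [Hp Hf]]|[p [Hp Hf]]]].
    + apply (clos_mono _ (U_q Qp absp 2)); [move=> g Hg; exists 2%nat; split; [by []| exact Hg]|].
      exact (part_h HQp 2 (isT : prime 2) Hf).
    + apply (clos_mono _ (U_q Qp absp p)); [move=> g Hg; exists p; split; [exact Hp| exact Hg]|].
      exact (part_e HQp Hp Hf).
    + apply clos_self; [|exists p; split; auto].
      destruct Hf as [w [s [Hw ->]]]. exists (MQp p w). split; [split; auto| exists s; reflexivity]. }
move=> q Hq f Hf. exact (part_h HQp q Hq Hf).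
Qed.
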